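(* Let $\Sigma$ be a finite set of embedded dependencies over a signature $\tau$. (a) $\Sigma$ is equivalent to a finite set of tuple-generating dependencies iff $\Sigma$ is preserved under both strictly-homomorphic images and strictly-homomorphic preimages. (b) $\Sigma$ is equivalent over finite structures to a finite set of tuple-generating dependencies iff $\Sigma$ is preserved under both strictly-homomorphic images and strictly-homomorphic preimages in the finite.
   Context: Signatures are relational (constant and relation symbols). An embedded dependency (ED) is a sentence $\forall\vec{x}(\phi(\vec{x})\rightarrow\exists\vec{y}\,\psi(\vec x,\vec y))$ with $\phi,\psi$ conjunctions of atomic formulas (equalities allowed) such that every universal variable occurring in the head occurs in some relational atom of the body. A tuple-generating dependency (TGD) is an equality-free ED. A strict homomorphism from $\mathcal{A}$ onto $\mathcal{B}$ is a surjective map $h:A\to B$ with $h(c^{\mathcal A})=c^{\mathcal B}$ for every constant symbol $c$ and, for every relation symbol $R$ and every tuple $\vec a$ over $A$ of its arity, $\vec a\in R^{\mathcal A}$ iff $h(\vec a)\in R^{\mathcal B}$; then $\mathcal{B}$ is a strictly-homomorphic image of $\mathcal{A}$ and $\mathcal{A}$ a strictly-homomorphic preimage of $\mathcal{B}$. A sentence is preserved under strictly-homomorphic images (resp. preimages) if for every model $\mathcal{A}$ and every strictly-homomorphic image (resp. preimage) $\mathcal{B}$ of $\mathcal{A}$, $\mathcal{B}$ is a model; ''in the finite'' means $\mathcal{A},\mathcal{B}$ range over finite structures. *)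

(* Defs.v *)
From Stdlib Require Import List.
From mathcomp Require Import all_boot.


Unset Strict Implicit.
Unset Printing Implicit Defensive.

Section EDs.

Variables (C Rs : Type) (ar : Rs -> nat).

Inductive term := TVar of nat | TConst of C.

Inductive atom :=
| ARel (r : Rs) (args : (ar r).-tuple term)
| AEq (t1 t2 : term).

Definition term_vars (t : term) : seq nat :=
  match t with TVar x => [:: x] | TConst _ => [::] end.

Definition atom_vars (a : atom) : seq nat :=
  match a with
  | ARel _ args => flatten (map term_vars args)
  | AEq t1 t2 => term_vars t1 ++ term_vars t2
  end.

Definition is_rel_atom (a : atom) : bool :=
  if a is ARel _ _ then true else false.

(* forall uvars, (/\ body -> exists evars, /\ head) *)
Record ED := MkED {
  ed_uvars : seq nat;
  ed_evars : seq nat;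
  ed_body : list atom;
  ed_head : list atom }.

Definition wf_ED (e : ED) : Prop :=
  [/\ (forall a x, In a (ed_body e) -> x \in atom_vars a -> x \in ed_uvars e),
      (forall a x, In a (ed_head e) -> x \in atom_vars a ->
                   (x \in ed_uvars e) || (x \in ed_evars e)),
      (forall x, x \in ed_uvars e -> x \notin ed_evars e) &
      (forall a x, In a (ed_head e) -> x \in atom_vars a -> x \in ed_uvars e ->
         exists b, [/\ In b (ed_body e), is_rel_atom b & x \in atom_vars b])].

Definition is_TGD (e : ED) : Prop :=
  forall a, In a (ed_body e) \/ In a (ed_head e) -> is_rel_atom a.

Record structure := MkStructure {
  dom : Type;
  dom_inh : dom;
  cst : C -> dom;
  rel : forall r : Rs, (ar r).-tuple dom -> Prop }.

Definition eval_term (A : structure) (v : nat -> dom A) (t : term) : dom A :=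
  match t with TVar x => v x | TConst c => cst A c end.

Definition sat_atom (A : structure) (v : nat -> dom A) (a : atom) : Prop :=
  match a with
  | ARel r args => rel A r (map_tuple (eval_term A v) args)
  | AEq t1 t2 => eval_term A v t1 = eval_term A v t2
  end.

Definition sat_conj (A : structure) (v : nat -> dom A) (l : list atom) : Prop :=
  forall a, In a l -> sat_atom A v a.

Definition sat_ED (A : structure) (e : ED) : Prop :=
  forall v : nat -> dom A, sat_conj A v (ed_body e) ->
    exists w : nat -> dom A,
      (forall x, x \notin ed_evars e -> w x = v x) /\ sat_conj A w (ed_head e).

Definition models (A : structure) (S : list ED) : Prop :=
  forall e, In e S -> sat_ED A e.

Definition finite_structure (A : structure) : Prop :=
  exists l : list (dom A), forall x, In x l.

Definition strict_hom (A B : structure) (h : dom A -> dom B) : Prop :=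
  [/\ (forall y : dom B, exists x : dom A, h x = y),
      (forall c, h (cst A c) = cst B c) &
      (forall r (t : (ar r).-tuple (dom A)), rel A r t <-> rel B r (map_tuple h t))].

Definition preserved_images (S : list ED) : Prop :=
  forall (A B : structure) (h : dom A -> dom B),
    strict_hom A B h -> models A S -> models B S.

Definition preserved_preimages (S : list ED) : Prop :=
  forall (A B : structure) (h : dom A -> dom B),
    strict_hom A B h -> models B S -> models A S.

Definition fin_preserved_images (S : list ED) : Prop :=
  forall (A B : structure) (h : dom A -> dom B),
    finite_structure A -> finite_structure B ->
    strict_hom A B h -> models A S -> models B S.

Definition fin_preserved_preimages (S : list ED) : Prop :=
  forall (A B : structure) (h : dom A -> dom B),
    finite_structure A -> finite_structure B ->
    strict_hom A B h -> models B S -> models A S.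

Definition equiv_to_TGDs (S : list ED) : Prop :=
  exists S' : list ED,
    [/\ (forall e, In e S' -> wf_ED e), (forall e, In e S' -> is_TGD e) &
        (forall A : structure, models A S <-> models A S')].

Definition fin_equiv_to_TGDs (S : list ED) : Prop :=
  exists S' : list ED,
    [/\ (forall e, In e S' -> wf_ED e), (forall e, In e S' -> is_TGD e) &
        (forall A : structure, finite_structure A -> (models A S <-> models A S'))].

End EDs.

Arguments wf_ED {C Rs ar} e.
Arguments is_TGD {C Rs ar} e.
Arguments models {C Rs ar} A S.
Arguments sat_ED {C Rs ar} A e.
Arguments strict_hom {C Rs ar} A B h.
Arguments finite_structure {C Rs ar} A.
Arguments preserved_images {C Rs ar} S.
Arguments preserved_preimages {C Rs ar} S.
Arguments fin_preserved_images {C Rs ar} S.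
Arguments fin_preserved_preimages {C Rs ar} S.
Arguments equiv_to_TGDs {C Rs ar} S.
Arguments fin_equiv_to_TGDs {C Rs ar} S.

(* Main.v *)
Require Import Defs.
From Stdlib Require Import List.
From mathcomp Require Import all_boot.
From Stdlib Require Import ClassicalEpsilon FunctionalExtensionality.

Arguments TVar {C}. Arguments TConst {C}.
Arguments ARel {C Rs ar}. Arguments AEq {C Rs ar}.
Arguments MkED {C Rs ar}.
Arguments ed_uvars {C Rs ar}. Arguments ed_evars {C Rs ar}.
Arguments ed_body {C Rs ar}. Arguments ed_head {C Rs ar}.
Arguments MkStructure {C Rs ar}.
Arguments dom {C Rs ar}. Arguments dom_inh {C Rs ar}. Arguments cst {C Rs ar}.
Arguments Defs.rel {C Rs ar}.
Arguments eval_term {C Rs ar}. Arguments sat_atom {C Rs ar}.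
Arguments sat_conj {C Rs ar}. Arguments atom_vars {C Rs ar}.
Arguments is_rel_atom {C Rs ar}. Arguments term_vars {C}.

Section Proof.
Variables (C Rs : Type) (ar : Rs -> nat).
Local Notation term := (term C).
Local Notation atom := (atom C Rs ar).
Local Notation ED := (ED C Rs ar).
Local Notation structure := (structure C Rs ar).

Lemma seqmapE (T U : Type) (f : T -> U) (s : seq T) : seq.map f s = List.map f s.
Proof. by elim: s => //= x s ->. Qed.

Definition upd (D : structure) (v : nat -> dom D) (x : nat) (d : dom D) :=
  fun z => if z == x then d else v z.

Definition sub_term (x : nat) (t : term) (s : term) : term :=
  match s with TVar y => if y == x then t else s | TConst _ => s end.

Definition sub_atom (x : nat) (t : term) (a : atom) : atom :=
  match a with
  | ARel r args => ARel r (map_tuple (sub_term x t) args)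
  | AEq t1 t2 => AEq (sub_term x t t1) (sub_term x t t2)
  end.

Lemma eval_sub (D : structure) v x t s :
  eval_term D v (sub_term x t s) = eval_term D (upd D v x (eval_term D v t)) s.
Proof. case: s => [y|c] //=. rewrite /upd. by case: (y == x). Qed.

Lemma map_tuple_comp (T U V : Type) n (f : U -> V) (g : T -> U) (t : n.-tuple T) :
  map_tuple f (map_tuple g t) = map_tuple (f \o g) t.
Proof. apply: val_inj => /=. by rewrite map_comp. Qed.

Lemma sat_sub (D : structure) v x t a :
  sat_atom D v (sub_atom x t a) <-> sat_atom D (upd D v x (eval_term D v t)) a.
Proof.
case: a => [r args|t1 t2] /=.
- rewrite map_tuple_comp.
  have -> : (eval_term D v \o sub_term x t) = eval_term D (upd D v x (eval_term D v t)).
    by apply: functional_extensionality => s; apply: eval_sub.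
  done.
- by rewrite !eval_sub.
Qed.

Lemma sat_conj_sub (D : structure) v x t l :
  sat_conj D v (List.map (sub_atom x t) l) <-> sat_conj D (upd D v x (eval_term D v t)) l.
Proof.
split => H a Ha.
- apply/sat_sub; apply: H; exact: in_map.
- move: Ha => /in_map_iff [b [<- Hb]]. apply/sat_sub. exact: H.
Qed.

Lemma upd_id (D : structure) v x : upd D v x (v x) = v.
Proof. apply: functional_extensionality => z; rewrite /upd; by case: eqP => [->|]. Qed.

Lemma eval_agree (D : structure) v w (t : term) :
  (forall y, t = TVar y -> w y = v y) -> eval_term D w t = eval_term D v t.
Proof. case: t => [y|c] //= H. exact: H. Qed.

Lemma eval_upd_nt (D : structure) v x d (t : term) : t <> TVar x -> eval_term D (upd D v x d) t = eval_term D v t.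
Proof.
move=> Ht; apply: eval_agree => y Hy; rewrite /upd; case: eqP => // Hyx.
by subst.
Qed.

Lemma sat_conj_split (D : structure) v B a l :
  (forall b, In b B <-> b = a \/ In b l) ->
  (sat_conj D v B <-> sat_atom D v a /\ sat_conj D v l).
Proof.
move=> HB; split.
- move=> H; split; first by apply: H; apply/HB; left.
  by move=> b Hb; apply: H; apply/HB; right.
- by move=> [Ha Hl] b /HB [->|Hb] //; apply: Hl.
Qed.

Lemma body_step (D : structure) (U E : seq nat) B H l a x t :
  (forall b, In b B <-> b = a \/ In b l) ->
  (forall v, sat_atom D v a <-> v x = eval_term D v t) ->
  x \notin E -> (forall y, t = TVar y -> y \notin E) -> t <> TVar x ->
  sat_ED D (MkED U E B H) <->
  sat_ED D (MkED U E (List.map (sub_atom x t) l) (List.map (sub_atom x t) H)).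
Proof.
move=> HB Ha HxE HtE Htx; rewrite /sat_ED /=; split.
- move=> Hs v /sat_conj_sub Hb.
  set v' := upd D v x (eval_term D v t) in Hb.
  have Hb' : sat_conj D v' B.
    apply/(sat_conj_split _ _ _ _ _ HB); split => //.
    apply/Ha. rewrite /v' {1}/upd eqxx. by rewrite eval_upd_nt.
  case: (Hs v' Hb') => w [Hag Hh].
  exists (upd D w x (v x)); split.
  + move=> z Hz. rewrite /upd. case: eqP => [->|ne] //.
    rewrite Hag // /v' /upd. by move/eqP: ne => /negbTE ->.
  + apply/sat_conj_sub.
    have -> : upd D (upd D w x (v x)) x (eval_term D (upd D w x (v x)) t) = w => //.
    apply: functional_extensionality => z. rewrite /upd. case: eqP => [->|] //.
    have -> : eval_term D (fun z0 => if z0 == x then v x else w z0) t = eval_term D w t.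
      by apply: (eval_upd_nt D w x (v x) t Htx).
    rewrite Hag // /v' /upd eqxx.
    apply: eval_agree => y Hy. rewrite Hag; last exact: HtE.
    rewrite /v' /upd. case: eqP => // Hyx. by subst.
- move=> Hs v Hb.
  have Hx : v x = eval_term D v t by apply/Ha; apply: Hb; apply/HB; left.
  have Hb' : sat_conj D v (List.map (sub_atom x t) l).
    apply/sat_conj_sub. rewrite -Hx upd_id.
    by move=> b Hbl; apply: Hb; apply/HB; right.
  case: (Hs v Hb') => w [Hag /sat_conj_sub Hh].
  exists (upd D w x (eval_term D w t)); split => // z Hz.
  rewrite /upd; case: eqP => [->|_]; last exact: Hag.
  rewrite Hx. apply: eval_agree => y Hy. apply: Hag. exact: HtE.
Qed.

Lemma body_drop (D : structure) (U E : seq nat) B H l a :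
  (forall b, In b B <-> b = a \/ In b l) ->
  (forall v, sat_atom D v a) ->
  sat_ED D (MkED U E B H) <-> sat_ED D (MkED U E l H).
Proof.
move=> HB Ha; rewrite /sat_ED /=; split => Hs v Hb; apply: Hs.
- by apply/(sat_conj_split _ _ _ _ _ HB).
- by move/(sat_conj_split _ _ _ _ _ HB): Hb => [].
Qed.

Lemma body_false (D : structure) (U E : seq nat) B H a :
  In a B -> (forall v, ~ sat_atom D v a) -> sat_ED D (MkED U E B H).
Proof. move=> HaB Ha v Hb. exfalso. exact: (Ha v (Hb a HaB)). Qed.

Lemma head_step (D : structure) (U E : seq nat) B H l a y t :
  (forall b, In b H <-> b = a \/ In b l) ->
  (forall v, sat_atom D v a <-> v y = eval_term D v t) ->
  y \in E -> t <> TVar y ->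
  sat_ED D (MkED U E B H) <-> sat_ED D (MkED U E B (List.map (sub_atom y t) l)).
Proof.
move=> HH Ha HyE Hty; rewrite /sat_ED /=; split.
- move=> Hs v Hb. case: (Hs v Hb) => w [Hag /(sat_conj_split _ _ _ _ _ HH) [/Ha Hwy Hl]].
  exists w; split => //. apply/sat_conj_sub. by rewrite -Hwy upd_id.
- move=> Hs v Hb. case: (Hs v Hb) => w [Hag /sat_conj_sub Hh].
  exists (upd D w y (eval_term D w t)); split.
  + move=> z Hz. rewrite /upd. case: eqP => [Hzy|_]; last exact: Hag.
    by subst; rewrite HyE in Hz.
  + apply/(sat_conj_split _ _ _ _ _ HH); split => //.
    apply/Ha. by rewrite {1}/upd eqxx eval_upd_nt.
Qed.

Lemma head_drop (D : structure) (U E : seq nat) B H l a :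
  (forall b, In b H <-> b = a \/ In b l) ->
  (forall v, sat_atom D v a) ->
  sat_ED D (MkED U E B H) <-> sat_ED D (MkED U E B l).
Proof.
move=> HH Ha; rewrite /sat_ED /=; split => Hs v Hb; case: (Hs v Hb) => w [Hag Hh];
  exists w; split => //.
- by move/(sat_conj_split _ _ _ _ _ HH): Hh => [].
- by apply/(sat_conj_split _ _ _ _ _ HH).
Qed.


Definition cdec (c d : C) : bool :=
  if excluded_middle_informative (c = d) then true else false.
Lemma cdecP c d : reflect (c = d) (cdec c d).
Proof. rewrite /cdec; case: excluded_middle_informative => H; by constructor. Qed.

Definition termeq (s t : term) : bool :=
  match s, t with
  | TVar x, TVar y => x == y
  | TConst c, TConst d => cdec c d
  | _, _ => false end.
Lemma termeqP s t : reflect (s = t) (termeq s t).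
Proof.
case: s => [x|c]; case: t => [y|d] /=; try (constructor; congruence).
- apply: (iffP eqP) => [->|[]] //.
- apply: (iffP (cdecP c d)) => [->|[]] //.
Qed.

Fixpoint pick_eq (l : seq atom) : option (term * term * seq atom) :=
  match l with
  | [::] => None
  | a :: l' =>
    match a with
    | AEq t1 t2 => Some (t1, t2, l')
    | ARel _ _ =>
      match pick_eq l' with
      | None => None
      | Some (t1, t2, l'') => Some (t1, t2, a :: l'')
      end
    end
  end.

Lemma pick_eq_some l t1 t2 l' : pick_eq l = Some (t1, t2, l') ->
  (forall b, In b l <-> b = AEq t1 t2 \/ In b l') /\ size l = (size l').+1.
Proof.
elim: l t1 t2 l' => //= a l IH t1 t2 l'. case: a => [r args|s1 s2].
- case E: (pick_eq l) => [[[u1 u2] l'']|] //= [H1 H2 H3]; subst.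
  case: (IH _ _ _ E) => Hm Hs. split; last by rewrite Hs.
  move=> b; split.
  + case=> [<-|/Hm [->|H]]; [right; left | left | right; right] => //.
  + case=> [->|[<-|H]]; [right; apply/Hm; left | left | right; apply/Hm; right] => //.
- case=> <- <- <-. split => // b; split.
  + by case=> [<-|H]; [left|right].
  + by case=> [->|H]; [left|right].
Qed.

Lemma pick_eq_none l : pick_eq l = None -> forall b, In b l -> is_rel_atom b.
Proof.
elim: l => //= a l IH. case: a => [r args|s1 s2] //.
case E: (pick_eq l) => [[[u1 u2] l'']|] //= _ b [<-|Hb] //. exact: IH.
Qed.

Lemma term_vars_sub z x t (s : term) : z \in term_vars (sub_term x t s) ->
  (z \in term_vars s /\ z != x) \/ (z \in term_vars t /\ x \in term_vars s).
Proof.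
case: s => [y|c] //=. case: eqP => [->|ne] H.
- by right; rewrite inE eqxx.
- left; split => //. move: H; rewrite inE => /eqP ->. by apply/eqP.
Qed.

Lemma term_vars_keep z x t (s : term) : z \in term_vars s -> z != x ->
  z \in term_vars (sub_term x t s).
Proof.
case: s => [y|c] //=. rewrite inE => /eqP -> /negbTE ->. by rewrite inE.
Qed.

Lemma term_vars_in z x t (s : term) : x \in term_vars s -> z \in term_vars t ->
  z \in term_vars (sub_term x t s).
Proof. case: s => [y|c] //=. rewrite inE => /eqP ->. by rewrite eqxx. Qed.

Lemma flatten_vars z (s : seq term) :
  z \in flatten (seq.map term_vars s) <-> exists u, In u s /\ z \in term_vars u.
Proof.
elim: s => [|u s IH] /=; first by split => // [[u []]].
rewrite mem_cat; split.
- case/orP => [H|/IH [u' [H1 H2]]]; [exists u; by split; [left|] | exists u'; by split; [right|]].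
- case=> u' [[<-|H1] H2]; apply/orP; [by left | right; apply/IH; by exists u'].
Qed.

Lemma In_seqmap (T U : Type) (f : T -> U) s y :
  In y (seq.map f s) <-> exists x, f x = y /\ In x s.
Proof. rewrite seqmapE. exact: in_map_iff. Qed.

Lemma atom_vars_sub z x t (a : atom) : z \in atom_vars (sub_atom x t a) ->
  (z \in atom_vars a /\ z != x) \/ (z \in term_vars t /\ x \in atom_vars a).
Proof.
case: a => [r args|s1 s2] /=.
- move/flatten_vars => [u [/In_seqmap [s [<- Hs]] Hz]].
  case/term_vars_sub: Hz => [[H1 H2]|[H1 H2]]; [left; split => // | right; split => //];
  apply/flatten_vars; by exists s.
- rewrite !mem_cat => /orP [] /term_vars_sub [[H1 H2]|[H1 H2]].
  + by left; rewrite H1.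
  + by right; rewrite H1 H2.
  + by left; rewrite H1 orbT.
  + by right; rewrite H1 H2 orbT.
Qed.

Lemma atom_vars_keep z x t (a : atom) : z \in atom_vars a -> z != x ->
  z \in atom_vars (sub_atom x t a).
Proof.
case: a => [r args|s1 s2] /=.
- move/flatten_vars => [u [Hu Hz]] Hzx. apply/flatten_vars.
  exists (sub_term x t u); split; last exact: term_vars_keep.
  apply/In_seqmap; by exists u.
- rewrite !mem_cat => /orP [] H Hzx; apply/orP; [left|right]; exact: term_vars_keep.
Qed.

Lemma atom_vars_in z x t (a : atom) : x \in atom_vars a -> z \in term_vars t ->
  z \in atom_vars (sub_atom x t a).
Proof.
case: a => [r args|s1 s2] /=.
- move/flatten_vars => [u [Hu Hx]] Hz. apply/flatten_vars.
  exists (sub_term x t u); split; last exact: term_vars_in.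
  apply/In_seqmap; by exists u.
- rewrite !mem_cat => /orP [] H Hz; apply/orP; [left|right]; exact: term_vars_in.
Qed.

Lemma is_rel_sub x t (a : atom) : is_rel_atom (sub_atom x t a) = is_rel_atom a.
Proof. by case: a. Qed.

Definition term_consts (t : term) : list C :=
  match t with TConst c => c :: nil | _ => nil end.
Definition atom_consts (a : atom) : list C :=
  match a with
  | ARel _ args => flat_map term_consts args
  | AEq t1 t2 => term_consts t1 ++ term_consts t2
  end.

Lemma term_consts_sub c x t (s : term) : In c (term_consts (sub_term x t s)) ->
  In c (term_consts s) \/ In c (term_consts t).
Proof. case: s => [y|d] /=; last by left. case: (y == x) => //=; by right. Qed.

Lemma atom_consts_sub c x t (a : atom) : In c (atom_consts (sub_atom x t a)) ->
  In c (atom_consts a) \/ In c (term_consts t).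
Proof.
case: a => [r args|s1 s2] /=.
- move/in_flat_map => [u [/In_seqmap [s [<- Hs]] Hc]].
  case/term_consts_sub: Hc => H; [left|by right]. apply/in_flat_map; by exists s.
- move/in_app_iff => [] /term_consts_sub [] H; try (by right); left; apply/in_app_iff; auto.
Qed.


Lemma wf_lists U E (B H B' H' : seq atom) : wf_ED (MkED U E B H) ->
  (forall b, In b B' -> In b B) -> (forall b, In b B -> is_rel_atom b -> In b B') ->
  (forall h, In h H' -> In h H) -> wf_ED (MkED U E B' H').
Proof.
case=> /= W1 W2 W3 W4 HB1 HB2 HH; split => //=.
- move=> a x Ha; apply: W1; auto.
- move=> a x Ha; apply: W2; auto.
- move=> a x Ha Hx HxU. case: (W4 a x (HH _ Ha) Hx HxU) => b [Hb Hr Hxb].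
  exists b; split; auto.
Qed.

Lemma wf_body_sub U E (B H l : seq atom) a x t : wf_ED (MkED U E B H) ->
  (forall b, In b B <-> b = a \/ In b l) -> x \in atom_vars a ->
  (forall z, z \in term_vars t -> z \in atom_vars a) -> ~~ is_rel_atom a ->
  wf_ED (MkED U E (List.map (sub_atom x t) l) (List.map (sub_atom x t) H)).
Proof.
case=> /= W1 W2 W3 W4 HB Hxa Hta Hra.
have aB : In a B by apply/HB; left.
have tU : forall z, z \in term_vars t -> z \in U by move=> z Hz; apply: (W1 a) => //; exact: Hta.
have xU : x \in U := W1 a x aB Hxa.
have relB : forall b, In b B -> is_rel_atom b -> In b l.
  move=> b /HB [Hba|] //. subst => Hr. by rewrite Hr in Hra.
split => /=.
- move=> b z /in_map_iff [b0 [<- Hb0]] /atom_vars_sub [[H1 _]|[H1 _]].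
  + apply: (W1 b0) => //. by apply/HB; right.
  + exact: tU.
- move=> h z /in_map_iff [h0 [<- Hh0]] /atom_vars_sub [[H1 _]|[H1 _]].
  + exact: (W2 h0).
  + by rewrite tU.
- exact: W3.
- move=> h z /in_map_iff [h0 [<- Hh0]] /atom_vars_sub [[H1 H2]|[H1 H2]] HzU.
  + case: (W4 h0 z Hh0 H1 HzU) => b [Hb Hr Hzb].
    exists (sub_atom x t b); split; [apply: in_map; exact: relB | by rewrite is_rel_sub | exact: atom_vars_keep].
  + case: (W4 h0 x Hh0 H2 xU) => b [Hb Hr Hxb].
    exists (sub_atom x t b); split; [apply: in_map; exact: relB | by rewrite is_rel_sub | exact: atom_vars_in].
Qed.

Lemma wf_head_sub U E (B H l : seq atom) a y t : wf_ED (MkED U E B H) ->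
  (forall b, In b H <-> b = a \/ In b l) ->
  (forall z, z \in term_vars t -> z \in atom_vars a) ->
  wf_ED (MkED U E B (List.map (sub_atom y t) l)).
Proof.
case=> /= W1 W2 W3 W4 HH Hta.
have aH : In a H by apply/HH; left.
split => //=.
- move=> h z /in_map_iff [h0 [<- Hh0]] /atom_vars_sub [[H1 _]|[H1 _]].
  + apply: (W2 h0) => //. by apply/HH; right.
  + apply: (W2 a) => //. exact: Hta.
- move=> h z /in_map_iff [h0 [<- Hh0]] /atom_vars_sub [[H1 H2]|[H1 H2]] HzU.
  + apply: (W4 h0 z) => //. by apply/HH; right.
  + apply: (W4 a z) => //. exact: Hta.
Qed.

Lemma wf_notE U E (B H : seq atom) a x : wf_ED (MkED U E B H) -> In a B ->
  x \in atom_vars a -> x \notin E.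
Proof. case=> /= W1 W2 W3 W4 Ha Hx. apply: W3. exact: (W1 a). Qed.

Variable L : list C.

Definition consts_in (e : ED) := forall a c, In a (ed_body e) \/ In a (ed_head e) ->
  In c (atom_consts a) -> In c L.

Lemma consts_lists U E (B H B' H' : seq atom) : consts_in (MkED U E B H) ->
  (forall b, In b B' -> In b B) -> (forall h, In h H' -> In h H) ->
  consts_in (MkED U E B' H').
Proof. move=> Hc HB HH a c /= [Ha|Ha]; apply: (Hc a) => /=; auto. Qed.

Lemma consts_body_sub U E (B H l : seq atom) x t : consts_in (MkED U E B H) ->
  (forall b, In b l -> In b B) -> (forall c, In c (term_consts t) -> In c L) ->
  consts_in (MkED U E (List.map (sub_atom x t) l) (List.map (sub_atom x t) H)).
Proof.
move=> Hc Hl Ht a c /= [] /in_map_iff [a0 [<- Ha0]] /atom_consts_sub [] H1; try exact: Ht;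
  apply: (Hc a0) => //=; auto.
Qed.

Lemma consts_head_sub U E (B H l : seq atom) x t : consts_in (MkED U E B H) ->
  (forall b, In b l -> In b H) -> (forall c, In c (term_consts t) -> In c L) ->
  consts_in (MkED U E B (List.map (sub_atom x t) l)).
Proof.
move=> Hc Hl Ht a c /= [Ha|/in_map_iff [a0 [<- Ha0]] /atom_consts_sub [] H1]; try exact: Ht.
- apply: (Hc a) => /=; auto.
- apply: (Hc a0) => /=; auto.
Qed.

Definition sep (D : structure) := forall c d, In c L -> In d L -> c <> d -> cst D c <> cst D d.

Fixpoint bproc (n : nat) (e : ED) : option ED :=
  match n with
  | 0 => Some e
  | n.+1 =>
    match pick_eq (ed_body e) with
    | None => Some e
    | Some (t1, t2, l) =>
      let U := ed_uvars e in let E := ed_evars e in let H := ed_head e in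
      match t1, t2 with
      | TVar x, TVar y =>
          if x == y then bproc n (MkED U E l H)
          else bproc n (MkED U E (List.map (sub_atom x t2) l) (List.map (sub_atom x t2) H))
      | TVar x, TConst _ =>
          bproc n (MkED U E (List.map (sub_atom x t2) l) (List.map (sub_atom x t2) H))
      | TConst _, TVar y =>
          bproc n (MkED U E (List.map (sub_atom y t1) l) (List.map (sub_atom y t1) H))
      | TConst c, TConst d => if cdec c d then bproc n (MkED U E l H) else None
      end
    end
  end.

Definition bspec (e : ED) (r : option ED) : Prop :=
  match r with
  | None => forall D, sep D -> sat_ED D e
  | Some e' => [/\ wf_ED e', consts_in e', (forall a, In a (ed_body e') -> is_rel_atom a) &
                 forall D, sep D -> (sat_ED D e <-> sat_ED D e')]
  end.

Lemma bspec_trans e e1 r : (forall D, sep D -> (sat_ED D e <-> sat_ED D e1)) ->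
  bspec e1 r -> bspec e r.
Proof.
case: r => [e'|] /= Heq.
- case=> H1 H2 H3 H4; split => // D HD. rewrite Heq //. exact: H4.
- move=> H D HD. apply/Heq => //. exact: H.
Qed.

Lemma size_lmap (T U : Type) (f : T -> U) (l : seq T) : size (List.map f l) = size l.
Proof. by rewrite -seqmapE size_map. Qed.

Arguments pick_eq_some {l t1 t2 l'}.
Arguments bspec_trans {e e1 r}.
Arguments wf_lists {U E B H B' H'}.
Arguments wf_body_sub {U E B H l a} x t.
Arguments wf_head_sub {U E B H l a} y t.
Arguments wf_notE {U E B H a x}.
Arguments consts_lists {U E B H B' H'}.
Arguments consts_body_sub {U E B H l} x t.
Arguments consts_head_sub {U E B H l} x t.

Lemma bproc_spec n e : size (ed_body e) <= n -> wf_ED e -> consts_in e -> bspec e (bproc n e).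
Proof.
elim: n e => [|n IH] e; case: e => U E B H Hs Hwf Hc.
- rewrite /bspec /=. split => //. move=> a Ha. by case: B Hs {Hwf Hc} Ha.
- rewrite /= in Hs *. case P: (pick_eq B) => [[[t1 t2] l]|]; last first.
    rewrite /bspec; split => //. exact: pick_eq_none.
  case: (pick_eq_some P) => HB Hsz.
  have Hsl : size l <= n by rewrite Hsz ltnS in Hs.
  have aB : In (AEq t1 t2) B by apply/HB; left.
  have lB : forall b, In b l -> In b B by move=> b Hb; apply/HB; right.
  have relB : forall b, In b B -> is_rel_atom b -> In b l.
    by move=> b /HB [->|].
  have Hw0 : wf_ED (MkED U E l H) by apply: (wf_lists Hwf).
  have Hc0 : consts_in (MkED U E l H) by apply: (consts_lists Hc).
  have Ht1 : forall c, In c (term_consts t1) -> In c L.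
    move=> c Hc1. apply: (Hc (AEq t1 t2)); [by left | by apply/in_app_iff; left].
  have Ht2 : forall c, In c (term_consts t2) -> In c L.
    move=> c Hc1. apply: (Hc (AEq t1 t2)); [by left | by apply/in_app_iff; right].
  have Hv1 : forall z, z \in term_vars t1 -> z \in atom_vars (AEq t1 t2 : atom).
    by move=> z Hz; rewrite /atom_vars /= mem_cat Hz.
  have Hv2 : forall z, z \in term_vars t2 -> z \in atom_vars (AEq t1 t2 : atom).
    by move=> z Hz; rewrite /atom_vars /= mem_cat Hz orbT.
  move: HB aB Ht1 Ht2 Hv1 Hv2 P.
  case: t1 => [x|c]; case: t2 => [y|d] HB aB Ht1 Ht2 Hv1 Hv2 P.
  + case: eqP => [Exy|Nxy] /=.
    * subst y. apply: (bspec_trans _ (IH (MkED U E l H) Hsl Hw0 Hc0)) => D _.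
      by apply: (body_drop D U E B H l _ HB) => v /=.
    * apply: (bspec_trans _ (IH _ _ _ _)).
      -- move=> D _. apply: (body_step D U E B H l _ x (TVar y) HB) => //.
         ++ apply: (wf_notE Hwf aB). by rewrite /= inE eqxx.
         ++ move=> z [<-]. apply: (wf_notE Hwf aB). by rewrite /= !inE eqxx orbT.
         ++ by move=> [] /esym.
      -- by rewrite /= size_lmap.
      -- apply: (wf_body_sub _ _ Hwf HB) => //. by rewrite /= inE eqxx.
      -- by apply: (consts_body_sub _ _ Hc).
  + apply: (bspec_trans _ (IH _ _ _ _)).
    -- move=> D _. apply: (body_step D U E B H l _ x (TConst d) HB) => //.
       apply: (wf_notE Hwf aB). by rewrite /= inE eqxx.
    -- by rewrite /= size_lmap.
    -- apply: (wf_body_sub _ _ Hwf HB) => //. by rewrite /= inE eqxx.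
    -- by apply: (consts_body_sub _ _ Hc).
  + apply: (bspec_trans _ (IH _ _ _ _)).
    -- move=> D _. apply: (body_step D U E B H l _ y (TConst c) HB) => //.
       ++ move=> v /=. split => ->; done.
       ++ apply: (wf_notE Hwf aB). by rewrite /= inE eqxx.
    -- by rewrite /= size_lmap.
    -- apply: (wf_body_sub _ _ Hwf HB) => //. by rewrite /= inE eqxx.
    -- by apply: (consts_body_sub _ _ Hc).
  + case: cdecP => [Ecd|Ncd] /=.
    * subst d. apply: (bspec_trans _ (IH (MkED U E l H) Hsl Hw0 Hc0)) => D _.
      by apply: (body_drop D U E B H l _ HB) => v /=.
    * move=> D HD. apply: (body_false D U E B H _ aB) => v /=.
      apply: HD => //; [apply: Ht1 | apply: Ht2]; by left.
Qed.


Fixpoint idx (L0 : list C) (c : C) : nat :=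
  match L0 with nil => 0 | d :: L' => if cdec c d then 0 else (idx L' c).+1 end.

Lemma idx_le L0 c : idx L0 c <= size L0.
Proof. elim: L0 => //= d L0 IH; by case: cdec. Qed.

Lemma idx_lt L0 c : In c L0 -> idx L0 c < size L0.
Proof.
elim: L0 => //= d L0 IH [->|H]; case: cdecP => // _. exact: IH.
Qed.

Lemma idx_inj L0 c d : In c L0 -> In d L0 -> idx L0 c = idx L0 d -> c = d.
Proof.
elim: L0 => //= e L0 IH Hc Hd. case: cdecP => [->|Nc]; case: cdecP => [->|Nd] //.
case => Heq. apply: IH => //.
- by case: Hc => // Hce; case: Nc.
- by case: Hd => // Hde; case: Nd.
Qed.

Definition blow (A : structure) : structure :=
  MkStructure (dom A * 'I_(size L).+2)%type (dom_inh A, ord0)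
    (fun c => (cst A c, inord (idx L c)))
    (fun r t => Defs.rel A r (map_tuple fst t)).

Lemma inordE m : m <= (size L).+1 -> nat_of_ord (inord m : 'I_(size L).+2) = m.
Proof. move=> Hm. apply: inordK. by rewrite ltnS. Qed.

Lemma blow_sep A : sep (blow A).
Proof.
move=> c d Hc Hd Ncd /= [_ /(congr1 (@nat_of_ord _))].
rewrite !inordE; try (apply: leqW; exact: idx_le).
move=> Heq. apply: Ncd. exact: (idx_inj _ _ _ Hc Hd Heq).
Qed.

Lemma blow_hom A : strict_hom (blow A) A fst.
Proof.
split.
- move=> y; by exists (y, ord0).
- by [].
- by move=> r t; split.
Qed.

Definition Fs : structure := MkStructure unit tt (fun _ => tt) (fun _ _ => True).

Lemma Fs_sat e : sat_ED Fs e.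
Proof.
move=> v _; exists v; split => // a _. case: a => //= t1 t2.
by case: (eval_term Fs v t1); case: (eval_term Fs v t2).
Qed.

Lemma bad_ED U E (B H : seq atom) t1 t2 : consts_in (MkED U E B H) ->
  (forall a, In a B -> is_rel_atom a) -> In (AEq t1 t2) H -> t1 <> t2 ->
  (forall x, t1 = TVar x -> x \notin E) -> (forall x, t2 = TVar x -> x \notin E) ->
  ~ sat_ED (blow Fs) (MkED U E B H).
Proof.
move=> Hc Hrel Hin Hne H1 H2 Hs.
have key : forall v, eval_term (blow Fs) v t1 = eval_term (blow Fs) v t2.
  move=> v.
  have Hb : sat_conj (blow Fs) v B.
    move=> a Ha. move: (Hrel a Ha). by case: a Ha.
  case: (Hs v Hb) => /= w [Hag Hh].
  have := Hh _ Hin => /=.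
  rewrite (eval_agree (blow Fs) v w t1); last by move=> y Hy; apply: Hag; apply: H1.
  rewrite (eval_agree (blow Fs) v w t2) //. by move=> y Hy; apply: Hag; apply: H2.
have Hc1 : forall c, t1 = TConst c -> In c L.
  move=> c Ht. apply: (Hc (AEq t1 t2)); first by right. by rewrite Ht /=; left.
have Hc2 : forall c, t2 = TConst c -> In c L.
  move=> c Ht. apply: (Hc (AEq t1 t2)); first by right. by rewrite Ht /= in_app_iff /=; right; left.
have sL1 : size L <= (size L).+1 by [].
have sL2 : (size L).+1 <= (size L).+1 by [].
move: key Hne Hc1 Hc2 {H1 H2 Hin Hs Hc}.
case: t1 => [x|c]; case: t2 => [y|d] key Hne Hc1 Hc2.
- move: (key (fun z => (tt, inord (if z == x then size L else (size L).+1)))) => /=.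
  rewrite eqxx. case: eqP => [Hyx|_]; first by subst; case: Hne.
  move=> [/(congr1 (@nat_of_ord _))]. rewrite !inordE //.
  by move=> /eqP; rewrite eqn_leq ltnn andbF.
- move: (key (fun z => (tt, inord (size L)))) => /= [/(congr1 (@nat_of_ord _))].
  rewrite !inordE //; last by apply: leqW; exact: idx_le.
  move=> Heq. have := idx_lt _ _ (Hc2 d erefl). by rewrite -Heq ltnn.
- move: (key (fun z => (tt, inord (size L)))) => /= [/(congr1 (@nat_of_ord _))].
  rewrite !inordE //; last by apply: leqW; exact: idx_le.
  move=> Heq. have := idx_lt _ _ (Hc1 c erefl). by rewrite Heq ltnn.
- move: (key (fun z => (tt, ord0))) => /=.
  move=> Heq. apply: (blow_sep Fs c d (Hc1 c erefl) (Hc2 d erefl)) => //.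
  by move=> Hcd; subst; case: Hne.
Qed.

Arguments bad_ED {U E B H t1 t2}.

Inductive hres := HGood of ED | HBad of ED.

Definition hsub (e : ED) l x t : ED :=
  MkED (ed_uvars e) (ed_evars e) (ed_body e) (List.map (sub_atom x t) l).

Fixpoint hproc (n : nat) (e : ED) : hres :=
  match n with
  | 0 => HGood e
  | n.+1 =>
    match pick_eq (ed_head e) with
    | None => HGood e
    | Some (t1, t2, l) =>
      if termeq t1 t2 then hproc n (MkED (ed_uvars e) (ed_evars e) (ed_body e) l) else
      let k := match t2 with
               | TVar y => if y \in ed_evars e then hproc n (hsub e l y t1) else HBad e
               | TConst _ => HBad e end in
      match t1 with
      | TVar x => if x \in ed_evars e then hproc n (hsub e l x t2) else k
      | TConst _ => k
      end
    end
  end.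

Definition hspec (e : ED) (r : hres) : Prop :=
  match r with
  | HGood e' => [/\ wf_ED e', is_TGD e' & forall D, sat_ED D e <-> sat_ED D e']
  | HBad e' => (forall D, sat_ED D e <-> sat_ED D e') /\ ~ sat_ED (blow Fs) e'
  end.

Lemma hspec_trans e e1 r : (forall D, sat_ED D e <-> sat_ED D e1) ->
  hspec e1 r -> hspec e r.
Proof.
case: r => [e'|e'] /= Heq.
- case=> H1 H2 H3; split => // D. rewrite Heq. exact: H3.
- case=> H1 H2; split => // D. rewrite Heq. exact: H1.
Qed.
Arguments hspec_trans {e e1 r}.

Lemma hproc_spec n e : size (ed_head e) <= n -> wf_ED e -> consts_in e ->
  (forall a, In a (ed_body e) -> is_rel_atom a) -> hspec e (hproc n e).
Proof.
elim: n e => [|n IH] e; case: e => U E B H Hs Hwf Hc Hrel.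
- rewrite /hspec /=. split => //. move=> a /= [Ha|Ha]; first exact: Hrel.
  by case: H Hs {Hwf Hc Hrel} Ha.
- rewrite /= in Hs Hrel *. case P: (pick_eq H) => [[[t1 t2] l]|]; last first.
    rewrite /hspec; split => //. move=> a /= [Ha|Ha]; first exact: Hrel.
    exact: (pick_eq_none _ P _ Ha).
  case: (pick_eq_some P) => HH Hsz.
  have Hsl : size l <= n by rewrite Hsz ltnS in Hs.
  have aH : In (AEq t1 t2) H by apply/HH; left.
  have lH : forall b, In b l -> In b H by move=> b Hb; apply/HH; right.
  have Ht1 : forall c, In c (term_consts t1) -> In c L.
    move=> c Hc1. apply: (Hc (AEq t1 t2)); [by right | by apply/in_app_iff; left].
  have Ht2 : forall c, In c (term_consts t2) -> In c L.
    move=> c Hc1. apply: (Hc (AEq t1 t2)); [by right | by apply/in_app_iff; right].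
  have Hv1 : forall z, z \in term_vars t1 -> z \in atom_vars (AEq t1 t2 : atom).
    by move=> z Hz; rewrite /atom_vars /= mem_cat Hz.
  have Hv2 : forall z, z \in term_vars t2 -> z \in atom_vars (AEq t1 t2 : atom).
    by move=> z Hz; rewrite /atom_vars /= mem_cat Hz orbT.
  case: termeqP => [Et|Nt] /=.
    subst t2. apply: (hspec_trans _ (IH (MkED U E B l) Hsl _ _ Hrel)).
    + move=> D. by apply: (head_drop D U E B H l _ HH) => v /=.
    + apply: (wf_lists Hwf) => //.
    + apply: (consts_lists Hc) => //.
  have Hbad : ~ sat_ED (blow Fs) (MkED U E B H) ->
      hspec (MkED U E B H) (HBad (MkED U E B H)).
    by move=> Hn; split => // D; split.
  move: HH aH Ht1 Ht2 Hv1 Hv2 Nt P.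
  case: t1 => [x|c]; case: t2 => [y|d] HH aH Ht1 Ht2 Hv1 Hv2 Nt P.
  + case Hx: (x \in E) => /=.
      apply: (hspec_trans _ (IH (hsub (MkED U E B H) l x (TVar y)) ltac:(by rewrite /= size_lmap)
        (wf_head_sub x (TVar y) Hwf HH Hv2) (consts_head_sub x (TVar y) Hc lH Ht2) Hrel)).
      move=> D. apply: (head_step D U E B H l _ x (TVar y) HH) => //.
      all: try (by move=> [] Hyx; subst; case: Nt).
    case Hy: (y \in E) => /=.
      apply: (hspec_trans _ (IH (hsub (MkED U E B H) l y (TVar x)) ltac:(by rewrite /= size_lmap)
        (wf_head_sub y (TVar x) Hwf HH Hv1) (consts_head_sub y (TVar x) Hc lH Ht1) Hrel)).
      move=> D. apply: (head_step D U E B H l _ y (TVar x) HH) => //.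
      all: try (by move=> v /=; split => ->); try (by move=> [] Hyx; subst; case: Nt).
    split; first by move=> D; split.
    apply: (bad_ED Hc Hrel aH Nt); move=> z [<-]; by rewrite ?Hx ?Hy.
  + case Hx: (x \in E) => /=.
      apply: (hspec_trans _ (IH (hsub (MkED U E B H) l x (TConst d)) ltac:(by rewrite /= size_lmap)
        (wf_head_sub x (TConst d) Hwf HH Hv2) (consts_head_sub x (TConst d) Hc lH Ht2) Hrel)).
      move=> D. by apply: (head_step D U E B H l _ x (TConst d) HH).
    split; first by move=> D; split.
    apply: (bad_ED Hc Hrel aH Nt) => // z [<-]; by rewrite Hx.
  + case Hy: (y \in E) => /=.
      apply: (hspec_trans _ (IH (hsub (MkED U E B H) l y (TConst c)) ltac:(by rewrite /= size_lmap)
        (wf_head_sub y (TConst c) Hwf HH Hv1) (consts_head_sub y (TConst c) Hc lH Ht1) Hrel)).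
      move=> D. apply: (head_step D U E B H l _ y (TConst c) HH) => //.
      all: try (by move=> v /=; split => ->).
    split; first by move=> D; split.
    apply: (bad_ED Hc Hrel aH Nt) => // z [<-]; by rewrite Hy.
  + split; first by move=> D; split.
    exact: (bad_ED Hc Hrel aH Nt).
Qed.


Lemma eval_hom (A B : structure) h v t : strict_hom A B h ->
  h (eval_term A v t) = eval_term B (h \o v) t.
Proof. case=> _ Hc _; case: t => //=. Qed.

Lemma sat_rel_hom (A B : structure) h v a : strict_hom A B h -> is_rel_atom a ->
  (sat_atom A v a <-> sat_atom B (h \o v) a).
Proof.
move=> Hh; case: a => //= r args _.
have Hr := Hh. case: Hr => _ _ Hr.
apply: iff_trans (Hr _ _) _. rewrite map_tuple_comp.
have -> : h \o eval_term A v = eval_term B (h \o v) => //.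
apply: functional_extensionality => t /=. exact: eval_hom.
Qed.

Lemma surj_inv (A B : structure) h : strict_hom A B h ->
  exists g : dom B -> dom A, forall y, h (g y) = y.
Proof.
case=> Hs _ _.
exists (fun y => proj1_sig (constructive_indefinite_description _ (Hs y))).
move=> y. exact: (proj2_sig (constructive_indefinite_description _ (Hs y))).
Qed.

Arguments surj_inv {A B h}.
Arguments sat_rel_hom {A B h v a}.

Lemma tgd_img (A B : structure) h e : is_TGD e -> strict_hom A B h ->
  sat_ED A e -> sat_ED B e.
Proof.
move=> Ht Hh Hs. rewrite /sat_ED => v Hb.
case: (surj_inv Hh) => g Hg.
have Hv : h \o (g \o v) = v by apply: functional_extensionality => x /=; rewrite Hg.
have HbA : sat_conj A (g \o v) (ed_body e).
  move=> a Ha. apply/(sat_rel_hom Hh); first by apply: Ht; left.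
  rewrite Hv; exact: Hb.
case: (Hs _ HbA) => w [Hag Hw].
exists (h \o w); split.
- move=> x Hx /=. by rewrite Hag // /= Hg.
- move=> a Ha. apply/(sat_rel_hom Hh); [by apply: Ht; right | exact: Hw].
Qed.

Lemma tgd_pre (A B : structure) h e : is_TGD e -> strict_hom A B h ->
  sat_ED B e -> sat_ED A e.
Proof.
move=> Ht Hh Hs. rewrite /sat_ED => v Hb.
case: (surj_inv Hh) => g Hg.
have HbB : sat_conj B (h \o v) (ed_body e).
  move=> a Ha. apply/(sat_rel_hom Hh); [by apply: Ht; left | exact: Hb].
case: (Hs _ HbB) => w [Hag Hw].
exists (fun x => if x \in ed_evars e then g (w x) else v x); split.
- move=> x /negbTE Hx. by rewrite Hx.
- move=> a Ha. apply/(sat_rel_hom Hh); first by apply: Ht; right.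
  have -> : h \o (fun x => if x \in ed_evars e then g (w x) else v x) = w; last exact: Hw.
  apply: functional_extensionality => x /=. case: ifP => Hx; first by rewrite Hg.
  by rewrite Hag // Hx.
Qed.

Fixpoint collect (S : list ED) : list ED :=
  match S with
  | nil => nil
  | e :: S' =>
    match bproc (size (ed_body e)) e with
    | None => collect S'
    | Some e1 =>
      match hproc (size (ed_head e1)) e1 with
      | HGood e2 => e2 :: collect S'
      | HBad _ => collect S'
      end
    end
  end.

Lemma collect_spec S : (forall e, In e S -> wf_ED e) -> (forall e, In e S -> consts_in e) ->
  (forall e, In e S -> sat_ED (blow Fs) e) ->
  [/\ (forall e, In e (collect S) -> wf_ED e), (forall e, In e (collect S) -> is_TGD e) &
      forall D, sep D -> ((forall e, In e S -> sat_ED D e) <-> (forall e, In e (collect S) -> sat_ED D e))].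
Proof.
elim: S => [|e S IH] Hw Hc Hf /=.
  split => // D _; split => ? ? [].
have [IH1 IH2 IH3] := IH (fun e' H => Hw e' (or_intror H)) (fun e' H => Hc e' (or_intror H))
  (fun e' H => Hf e' (or_intror H)).
have He := bproc_spec (size (ed_body e)) e (leqnn _) (Hw e (or_introl erefl)) (Hc e (or_introl erefl)).
case Eb: (bproc _ e) He => [e1|] He /=.
- case: He => W1 C1 R1 Q1.
  have Hh := hproc_spec (size (ed_head e1)) e1 (leqnn _) W1 C1 R1.
  case Eh: (hproc _ e1) Hh => [e2|e2] /=.
  + case=> W2 T2 Q2. split.
    * by move=> e' [<-|H]; auto.
    * by move=> e' [<-|H]; auto.
    * move=> D HD. split.
      -- move=> Hall e' [He'|H].
         ++ subst e'. apply/Q2. apply/(Q1 D HD). apply: Hall; by left.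
         ++ apply: ((IH3 D HD).1 _ e' H) => e'' H'. apply: Hall; by right.
      -- move=> Hall e' [He'|H].
         ++ subst e'. apply/(Q1 D HD). apply/Q2. apply: Hall; by left.
         ++ apply: ((IH3 D HD).2 _ e' H) => e'' H'. apply: Hall; by right.
  + case=> Q2 N2. exfalso. apply: N2. apply/Q2. apply/(Q1 _ (blow_sep Fs)).
    apply: Hf; by left.
- split => // D HD. split.
  + move=> Hall. apply/(IH3 D HD) => e' H; apply: Hall; by right.
  + move=> Hall e' [He'|H]; first by subst e'; exact: He.
    exact: ((IH3 D HD).2 Hall e' H).
Qed.

Lemma core (Q : structure -> Prop) S : (forall e, In e S -> wf_ED e) ->
  (forall e, In e S -> consts_in e) -> Q Fs -> (forall A, Q A -> Q (blow A)) ->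
  (forall A B h, Q A -> Q B -> strict_hom A B h -> models A S -> models B S) ->
  (forall A B h, Q A -> Q B -> strict_hom A B h -> models B S -> models A S) ->
  exists S', [/\ (forall e, In e S' -> wf_ED e), (forall e, In e S' -> is_TGD e) &
     forall A, Q A -> (models A S <-> models A S')].
Proof.
move=> Hw Hc QF Qb Himg Hpre.
have Hf : models (blow Fs) S.
  apply: (Hpre (blow Fs) Fs fst) => //; [exact: Qb | exact: blow_hom | move=> e _; exact: Fs_sat].
have [C1 C2 C3] := collect_spec S Hw Hc Hf.
exists (collect S); split => // A QA. split.
- move=> HA. have HbA : models (blow A) S := Hpre (blow A) A fst (Qb A QA) QA (blow_hom A) HA.
  have Hc' := (C3 _ (blow_sep A)).1 HbA.
  move=> e He. apply: (tgd_img (blow A) A fst) => //; [exact: C2 | exact: blow_hom | exact: Hc'].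
- move=> HA. apply: (Himg (blow A) A fst) => //; [exact: Qb | exact: blow_hom |].
  apply/(C3 _ (blow_sep A)) => e He. apply: (tgd_pre (blow A) A fst) => //;
  [exact: C2 | exact: blow_hom | exact: HA].
Qed.

End Proof.

Section Final.
Variables (C Rs : Type) (ar : Rs -> nat).
Local Notation ED := (ED C Rs ar).
Local Notation structure := (structure C Rs ar).

Definition allconsts (S : list ED) : list C :=
  flat_map (fun e => flat_map (@atom_consts C Rs ar) (ed_body e ++ ed_head e)) S.

Lemma allconsts_in S e : In e S -> consts_in C Rs ar (allconsts S) e.
Proof.
move=> HeS a c Ha Hc. apply/in_flat_map. exists e; split => //.
apply/in_flat_map. exists a; split => //. by apply/in_app_iff.
Qed.

Lemma memIn (T : eqType) (x : T) (s : seq T) : x \in s -> In x s.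
Proof.
elim: s => //= y s IH; rewrite inE => /orP [/eqP ->|H]; [by left | right; exact: IH].
Qed.

Lemma blow_finite L (A : structure) : finite_structure A -> finite_structure (blow C Rs ar L A).
Proof.
case=> la Hla. exists (list_prod la (enum 'I_(size L).+2)) => [[a i]].
apply: in_prod => //. apply: memIn. by rewrite mem_enum.
Qed.

Lemma Fs_finite : finite_structure (Fs C Rs ar).
Proof. exists [:: tt]. case. by left. Qed.

Lemma equiv_pres (Q : structure -> Prop) (S S' : list ED) :
  (forall e, In e S' -> is_TGD e) -> (forall A, Q A -> (models A S <-> models A S')) ->
  (forall A B h, Q A -> Q B -> strict_hom A B h -> models A S -> models B S) /\
  (forall A B h, Q A -> Q B -> strict_hom A B h -> models B S -> models A S).
Proof.
move=> Ht Heq; split => A B h QA QB Hh HA.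
- apply/(Heq B QB) => e He. apply: (tgd_img _ _ _ A B h) => //; first exact: Ht.
  exact: ((Heq A QA).1 HA).
- apply/(Heq A QA) => e He. apply: (tgd_pre _ _ _ A B h) => //; first exact: Ht.
  exact: ((Heq B QB).1 HA).
Qed.

End Final.

Theorem theorem4 (C Rs : Type) (ar : Rs -> nat) (S : list (ED C Rs ar))
  (HS : forall e, In e S -> wf_ED e) :
  (equiv_to_TGDs S <-> preserved_images S /\ preserved_preimages S) /\
  (fin_equiv_to_TGDs S <-> fin_preserved_images S /\ fin_preserved_preimages S).
Proof.
split; split.
- case=> S' [W T Heq].
  have [H1 H2] := equiv_pres C Rs ar (fun _ => True) S S' T (fun A _ => Heq A).
  split => A B h; [exact: H1 A B h I I | exact: H2 A B h I I].
- case=> Himg Hpre.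
  have [S' [W T Heq]] := core C Rs ar (allconsts C Rs ar S) (fun _ => True) S HS
    (fun e He => allconsts_in C Rs ar S e He) I (fun _ _ => I)
    (fun A B h _ _ => Himg A B h) (fun A B h _ _ => Hpre A B h).
  exists S'; split => // A. exact: Heq A I.
- case=> S' [W T Heq].
  exact: (equiv_pres C Rs ar finite_structure S S' T Heq).
- case=> Himg Hpre.
  have [S' [W T Heq]] := core C Rs ar (allconsts C Rs ar S) finite_structure S HS
    (fun e He => allconsts_in C Rs ar S e He) (Fs_finite C Rs ar)
    (fun A HA => blow_finite C Rs ar (allconsts C Rs ar S) A HA) Himg Hpre.
  by exists S'; split.
Qed.
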